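(* Let $\mathbf g=(g_1,\dots,g_s)$, $Q=\mathcal Q(\mathbf g)$ and $J=\sqrt[\mathbb R]{\operatorname{supp}Q}$. Then for every $d\in\mathbb N$ there exists $k\ge d$ such that $J_d=J\cap\mathbb R[\mathbf X]_d\subseteq\overline{\mathcal Q_k(\mathbf g)}$, the closure being taken in $\mathbb R[\mathbf X]_k$.
   Context: $\mathbb R[\mathbf X]=\mathbb R[X_1,\dots,X_n]$, $\mathbb R[\mathbf X]_t$ polynomials of degree $\le t$ with Euclidean topology; $\Sigma^2$ sums of squares, $\Sigma^2_t=\Sigma^2\cap\mathbb R[\mathbf X]_t$. $\mathcal Q_t(\mathbf g)=\{s_0+\sum_js_jg_j:s_0\in\Sigma^2_t,s_j\in\Sigma^2,\deg s_j\le t-\deg g_j\}$, $\mathcal Q(\mathbf g)=\bigcup_t\mathcal Q_t(\mathbf g)$, $\operatorname{supp}Q=Q\cap(-Q)$, $\sqrt[\mathbb R]{I}=\{p:\exists m\in\mathbb N, s\in\Sigma^2,\ p^{2m}+s\in I\}$. *)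

(* Defs.v *)
From HB Require Import structures.
From mathcomp Require Import all_boot all_order all_algebra.
From mathcomp Require Import reals.
From mathcomp Require Import mpoly.

Set Implicit Arguments.
Unset Strict Implicit.
Unset Printing Implicit Defensive.

Import Order.TTheory GRing.Theory Num.Theory.
Local Open Scope ring_scope.

(* Polynomials R[X_1..X_n] are {mpoly R[n]}; total degree of p <= t
   (0 counts as having every degree <= t). *)
Definition deg_le (R : realType) (n : nat) (p : {mpoly R[n]}) (t : nat) : bool :=
  (msize p <= t.+1)%N.

Definition tdeg (R : realType) (n : nat) (p : {mpoly R[n]}) : nat := (msize p).-1.

Definition is_sos (R : realType) (n : nat) (p : {mpoly R[n]}) : Prop :=
  exists (m : nat) (q : 'I_m -> {mpoly R[n]}), p = \sum_(i < m) q i ^+ 2.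

Definition in_Qt (R : realType) (n s : nat) (g : 'I_s -> {mpoly R[n]}) (t : nat)
    (p : {mpoly R[n]}) : Prop :=
  exists (s0 : {mpoly R[n]}) (sj : 'I_s -> {mpoly R[n]}),
    [/\ is_sos s0, deg_le s0 t,
        (forall j, is_sos (sj j) /\
                   (sj j = 0 \/ (tdeg (sj j) + tdeg (g j) <= t)%N))
      & p = s0 + \sum_(j < s) sj j * g j].

Definition in_Q (R : realType) (n s : nat) (g : 'I_s -> {mpoly R[n]})
    (p : {mpoly R[n]}) : Prop :=
  exists t : nat, in_Qt g t p.

Definition in_supp (R : realType) (n s : nat) (g : 'I_s -> {mpoly R[n]})
    (p : {mpoly R[n]}) : Prop :=
  in_Q g p /\ in_Q g (- p).

Definition in_real_radical (R : realType) (n : nat) (I : {mpoly R[n]} -> Prop)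
    (p : {mpoly R[n]}) : Prop :=
  exists (m : nat) (sq : {mpoly R[n]}), is_sos sq /\ I (p ^+ (2 * m) + sq).

(* p lies in the closure of S ∩ R[X]_k inside the finite-dimensional space
   R[X]_k (Euclidean topology = topology of the max-norm on coefficients). *)
Definition in_closure_k (R : realType) (n : nat) (S : {mpoly R[n]} -> Prop)
    (k : nat) (p : {mpoly R[n]}) : Prop :=
  deg_le p k /\
  forall eps : R, 0 < eps ->
    exists q : {mpoly R[n]}, [/\ S q, deg_le q k &
      forall m : 'X_{1..n}, `|p@_m - q@_m| < eps].

(* Main.v *)
Require Import Defs.
From HB Require Import structures.
From mathcomp Require Import all_boot all_order all_algebra.
From mathcomp Require Import reals.
From mathcomp Require Import mpoly.
From mathcomp Require Import zify ring lra.
From Stdlib Require Import Classical.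
Import Order.TTheory GRing.Theory Num.Theory.
Local Open Scope ring_scope.

Set Implicit Arguments.
Unset Strict Implicit.
Section Aux.
Variables (R : realType) (n s : nat) (g : 'I_s -> {mpoly R[n]}).
Implicit Types (p q h : {mpoly R[n]}).

Lemma deg_leE p t : deg_le p t = (tdeg p <= t)%N.
Proof. by rewrite /deg_le /tdeg; case: (msize p). Qed.

Lemma tdeg0 : tdeg (0 : {mpoly R[n]}) = 0%N.
Proof. by rewrite /tdeg msize0. Qed.

Lemma tdegC c : tdeg (c%:MP : {mpoly R[n]}) = 0%N.
Proof. by rewrite /tdeg msizeC; case: (c != 0). Qed.

Lemma tdegD p q : (tdeg (p + q) <= maxn (tdeg p) (tdeg q))%N.
Proof.
rewrite /tdeg; have := msizeD_le p q.
case: (msize (p+q)) => // k; case: (msize p) => [|a]; case: (msize q) => [|b] //=;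
 rewrite ?maxn0 ?max0n; try lia.
Qed.

Lemma tdegN p : tdeg (- p) = tdeg p.
Proof. by rewrite /tdeg msizeN. Qed.

Lemma tdegZ c p : (tdeg (c *: p) <= tdeg p)%N.
Proof. rewrite /tdeg; have := msizeZ_le p c; lia. Qed.

Lemma tdegM p q : (tdeg (p * q) <= tdeg p + tdeg q)%N.
Proof.
have [->|pn0] := eqVneq p 0; first by rewrite mul0r tdeg0.
have [->|qn0] := eqVneq q 0; first by rewrite mulr0 tdeg0.
rewrite /tdeg msizeM //.
have : (0 < msize p)%N by rewrite lt0n msize_poly_eq0.
have : (0 < msize q)%N by rewrite lt0n msize_poly_eq0.
move: (msize p) (msize q) => a b; lia.
Qed.

Lemma tdegX p k : (tdeg (p ^+ k) <= k * tdeg p)%N.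
Proof.
elim: k => [|k IH]; first by rewrite expr0 -mpolyC1 tdegC.
rewrite exprS; apply: leq_trans (tdegM _ _) _; rewrite mulSn leq_add2l //.
Qed.


Lemma sos0 : is_sos (0 : {mpoly R[n]}).
Proof. by exists 0%N, (fun _ => 0); rewrite big_ord0. Qed.

Lemma sos_sq h : is_sos (h ^+ 2).
Proof. by exists 1%N, (fun _ => h); rewrite big_ord1. Qed.

Lemma sosD p q : is_sos p -> is_sos q -> is_sos (p + q).
Proof.
move=> [m1 [q1 ->]] [m2 [q2 ->]].
exists (m1 + m2)%N, (fun i => match split i with inl a => q1 a | inr b => q2 b end).
rewrite big_split_ord /=; congr (_ + _); apply: eq_bigr => i _.
  by rewrite (unsplitK (inl i)).
by rewrite (unsplitK (inr i)).
Qed.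

Lemma sosZ c p : 0 <= c -> is_sos p -> is_sos (c *: p).
Proof.
move=> c0 [m [q ->]]; exists m, (fun i => Num.sqrt c *: q i).
rewrite scaler_sumr; apply: eq_bigr => i _; by rewrite exprZn sqr_sqrtr.
Qed.

Lemma sosMsq h p : is_sos p -> is_sos (h ^+ 2 * p).
Proof.
move=> [m [q ->]]; exists m, (fun i => h * q i).
rewrite mulr_sumr; apply: eq_bigr => i _; by rewrite exprMn.
Qed.

Lemma sosC c : 0 <= c -> is_sos (c%:MP : {mpoly R[n]}).
Proof.
move=> c0; have -> : c%:MP = (Num.sqrt c)%:MP ^+ 2 :> {mpoly R[n]}.
  by rewrite -rmorphXn /= sqr_sqrtr.
exact: sos_sq.
Qed.

Lemma Q_mono t t' p : (t <= t')%N -> in_Qt g t p -> in_Qt g t' p.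
Proof.
move=> tt' [s0 [sj [H1 H2 H3 H4]]]; exists s0, sj; split => //.
  by move: H2; rewrite !deg_leE => /leq_trans; apply.
move=> j; case: (H3 j) => a [b|b]; split => //; [by left|right].
exact: leq_trans tt'.
Qed.

Lemma Q_sos t p : is_sos p -> deg_le p t -> in_Qt g t p.
Proof.
move=> H1 H2; exists p, (fun _ => 0); split => //.
  by move=> j; split; [exact: sos0| left].
by rewrite big1 ?addr0 // => j _; rewrite mul0r.
Qed.

Lemma Q_add t p q : in_Qt g t p -> in_Qt g t q -> in_Qt g t (p + q).
Proof.
move=> [s0 [sj [H1 H2 H3 ->]]] [s0' [sj' [H1' H2' H3' ->]]].
exists (s0 + s0'), (fun j => sj j + sj' j); split.
- exact: sosD.
- move: H2 H2'; rewrite !deg_leE => a b; apply: leq_trans (tdegD _ _) _.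
  by rewrite geq_max a b.
- move=> j; case: (H3 j) => a1 b1; case: (H3' j) => a2 b2; split; first exact: sosD.
  case: b1 => [->|b1]; first by rewrite add0r.
  case: b2 => [->|b2]; first by rewrite addr0; right.
  right; apply: leq_trans _ (_ : maxn (tdeg (sj j) + tdeg (g j)) (tdeg (sj' j) + tdeg (g j)) <= t)%N.
    by rewrite -addn_maxl leq_add2r tdegD.
  by rewrite geq_max b1 b2.
- have -> : \sum_(j < s) (sj j + sj' j) * g j = \sum_(j < s) sj j * g j + \sum_(j < s) sj' j * g j.
    by rewrite -big_split; apply: eq_bigr => j _; rewrite mulrDl.
  by rewrite addrACA.
Qed.

Lemma Q_scale t c p : 0 <= c -> in_Qt g t p -> in_Qt g t (c *: p).
Proof.
move=> c0 [s0 [sj [H1 H2 H3 ->]]].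
exists (c *: s0), (fun j => c *: sj j); split.
- exact: sosZ.
- by move: H2; rewrite !deg_leE; apply: leq_trans (tdegZ _ _).
- move=> j; case: (H3 j) => a b; split; first exact: sosZ.
  case: b => [->|b]; first by rewrite scaler0; left.
  by right; apply: leq_trans b; rewrite leq_add2r tdegZ.
- rewrite scalerDr scaler_sumr; congr (_ + _); apply: eq_bigr => j _.
  by rewrite scalerAl.
Qed.

Lemma Q_mulsq t h p : in_Qt g t p -> in_Qt g (t + 2 * tdeg h) (h ^+ 2 * p).
Proof.
move=> [s0 [sj [H1 H2 H3 ->]]].
have dh : (tdeg (h ^+ 2) <= 2 * tdeg h)%N by apply: tdegX.
exists (h ^+ 2 * s0), (fun j => h ^+ 2 * sj j); split.
- exact: sosMsq.
- move: H2; rewrite !deg_leE => H2; apply: leq_trans (tdegM _ _) _.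
  by rewrite addnC leq_add.
- move=> j; case: (H3 j) => a b; split; first exact: sosMsq.
  case: b => [->|b]; first by rewrite mulr0; left.
  right; apply: leq_trans (leq_add (tdegM _ _) (leqnn _)) _.
  rewrite -addnA addnC leq_add //.
- rewrite mulrDr mulr_sumr; congr (_ + _); apply: eq_bigr => j _.
  by rewrite mulrA.
Qed.


Lemma Q_const t c : 0 <= c -> in_Qt g t (c%:MP).
Proof. by move=> c0; apply: Q_sos; [exact: sosC| rewrite deg_leE tdegC]. Qed.

Lemma halve_id (c : R) (r : {mpoly R[n]}) :
  (c%:MP - r) ^+ 2 + ((c ^+ 2)%:MP - r ^+ 2) = (2 * c) *: (c%:MP - r).
Proof.
rewrite -mul_mpolyC rmorphXn rmorphM /= rmorph_nat; ring.
Qed.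

Lemma halve K D r : deg_le r D -> (2 * D <= K)%N ->
  (forall c : R, 0 < c -> in_Qt g K (c%:MP - r ^+ 2)) ->
  forall c : R, 0 < c -> in_Qt g K (c%:MP - r).
Proof.
move=> dr DK H c c0.
have -> : c%:MP - r = (2 * c)^-1 *: ((c%:MP - r) ^+ 2 + ((c ^+ 2)%:MP - r ^+ 2)).
  rewrite halve_id scalerA mulVf ?scale1r //; lra.
apply: Q_scale; first by rewrite invr_ge0; lra.
apply: Q_add; last by apply: H; rewrite exprn_gt0.
apply: Q_sos; first exact: sos_sq.
rewrite deg_leE; apply: leq_trans (tdegX _ _) _; apply: leq_trans DK.
rewrite leq_mul2l /=; apply: leq_trans (tdegD _ _) _.
by rewrite tdegC tdegN max0n -deg_leE.
Qed.

Lemma chain K d p j : deg_le p d -> (2 * (2 ^ j * d) <= K)%N ->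
  (forall c : R, 0 < c -> in_Qt g K (c%:MP - (p ^+ (2 ^ j)) ^+ 2)) ->
  forall c : R, 0 < c -> in_Qt g K (c%:MP - p) /\ in_Qt g K (c%:MP + p).
Proof.
move=> dp; elim: j => [|j IH] DK H c c0.
  rewrite expn0 mul1n in DK; rewrite expn0 expr1 in H.
  split; first exact: (halve dp DK H c0).
  have dp' : deg_le (- p) d by rewrite deg_leE tdegN -deg_leE.
  rewrite -[p]opprK; apply: (halve dp' DK) => //.
  by move=> c' c'0; rewrite sqrrN; apply: H.
apply: IH => //.
  by apply: leq_trans DK; rewrite expnS leq_mul2l /= -mulnA leq_pmull.
move=> c1 c10; apply: (halve (r := p ^+ (2 ^ j) ^+ 2) (D := (2 ^ j.+1 * d)%N) _ _ _ c10) => //.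
  rewrite deg_leE; apply: leq_trans (tdegX _ _) _; rewrite expnS -mulnA.
  apply: leq_mul => //; apply: leq_trans (tdegX _ _) _.
  by rewrite leq_mul2l -deg_leE dp orbT.
by move=> c' c'0; rewrite -[(p ^+ (2^j)) ^+ 2]exprM -expnSr; apply: H.
Qed.


Definition good K p := forall c : R, 0 < c -> in_Qt g K (c%:MP + p) /\ in_Qt g K (c%:MP - p).

Lemma elem d p : in_real_radical (in_supp g) p -> deg_le p d -> exists K, good K p.
Proof.
move=> [m [sq [Hsq [_ [t1 H1]]]]] dp.
set t2 := maxn t1 (tdeg sq).
have H2 : in_Qt g t2 (- p ^+ (2 * m)).
  have -> : - p ^+ (2 * m) = - (p ^+ (2 * m) + sq) + sq.
    by rewrite opprD addrNK.
  apply: Q_add; first by apply: Q_mono H1; rewrite leq_maxl.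
  by apply: Q_sos => //; rewrite deg_leE leq_maxr.
set h := p ^+ (2 ^ m - m).
have H3 := Q_mulsq h H2.
have E : h ^+ 2 * - p ^+ (2 * m) = - (p ^+ (2 ^ m)) ^+ 2.
  rewrite mulrN -!exprM -exprD; congr (- (p ^+ _)).
  have : (m <= 2 ^ m)%N by apply: ltnW; apply: ltn_expl.
  move: (2 ^ m)%N => e; lia.
rewrite E in H3.
exists (maxn (t2 + 2 * tdeg h) (2 * (2 ^ m * d))) => c c0.
have [A B] := chain dp (leq_maxr _ _) (fun c' (c'0 : 0 < c') =>
   Q_add (Q_const _ (ltW c'0)) (Q_mono (leq_maxl _ _) H3)) c0.
by split.
Qed.


Lemma good_mono K K' p : (K <= K')%N -> good K p -> good K' p.
Proof. by move=> KK H c c0; case: (H c c0) => a b; split; apply: Q_mono KK _. Qed.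

Lemma good0 K : good K 0.
Proof. by move=> c c0; rewrite subr0 addr0; split; apply: Q_const; apply: ltW. Qed.

Lemma goodN K p : good K p -> good K (- p).
Proof. by move=> H c c0; case: (H c c0) => a b; rewrite opprK; split. Qed.

Lemma goodD K p q : good K p -> good K q -> good K (p + q).
Proof.
move=> Hp Hq c c0.
have c20 : 0 < c / 2 by lra.
case: (Hp _ c20) => a b; case: (Hq _ c20) => a' b'.
have Ec : c%:MP = (c / 2)%:MP + (c / 2)%:MP :> {mpoly R[n]}.
  by rewrite -rmorphD /=; congr (_%:MP); lra.
split; rewrite Ec.
  by rewrite addrACA; apply: Q_add.
by rewrite opprD addrACA; apply: Q_add.
Qed.

Lemma goodZ K c p : good K p -> good K (c *: p).
Proof.
wlog c0 : c p / 0 <= c.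
  move=> W H; case: (lerP 0 c) => hc; first exact: W.
  rewrite -[c]opprK scaleNr -scalerN; apply: W; [lra| exact: goodN].
move=> H; have [->|cn0] := eqVneq c 0; first by rewrite scale0r; apply: good0.
have cp : 0 < c by rewrite lt_def cn0.
move=> e e0; have ec : 0 < e / c by apply: divr_gt0.
case: (H _ ec) => a b.
have Ee : e%:MP = c *: (e / c)%:MP :> {mpoly R[n]}.
  by rewrite -mul_mpolyC -rmorphM /= mulrC divfK.
split; rewrite Ee -?scalerBr -?scalerDr; apply: Q_scale => //.
Qed.

Lemma good_sum K k (w : 'I_k -> R) (f : 'I_k -> {mpoly R[n]}) :
  (forall i, good K (f i)) -> good K (\sum_(i < k) w i *: f i).
Proof.
move=> H; apply: (big_ind (good K)); [exact: good0| exact: goodD|].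
by move=> i _; apply: goodZ.
Qed.

End Aux.
Section Span.
Variables (R : realType) (n d : nat).
Variable P : {mpoly R[n]} -> Prop.
Hypothesis Pdeg : forall p, P p -> deg_le p d.

Local Notation T := ('X_{1..n < d.+1}).
Local Notation N := #|{: T}|.

Definition vec (p : {mpoly R[n]}) : 'rV[R]_N :=
  \row_j p@_(enum_val j : T).

Definition Mof (f : nat -> {mpoly R[n]}) k : 'M[R]_(k, N) :=
  \matrix_(i < k, j < N) (f i)@_(enum_val j : T).

Lemma coef_high (p : {mpoly R[n]}) (m : 'X_{1..n}) : deg_le p d -> (d.+1 <= mdeg m)%N -> p@_m = 0.
Proof.
move=> dp hm; apply/eqP; rewrite mcoeff_eq0; apply: msize_mdeg_ge.
by apply: leq_trans hm; move: dp; rewrite /deg_le.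
Qed.

Lemma span_conclude k f : (forall i, (i < k)%N -> P (f i)) ->
  (forall p, P p -> (vec p <= Mof f k)%MS) ->
  exists k f, (forall i, (i < k)%N -> P (f i)) /\
   forall p, P p -> exists w : 'I_k -> R, p = \sum_(i < k) w i *: f i.
Proof.
move=> Pf H; exists k, f; split => // p Pp.
case/submxP: (H p Pp) => D E; exists (fun i => D 0 i).
apply/mpolyP => m; rewrite raddf_sum /=.
under eq_bigr do rewrite mcoeffZ.
case: (ltnP (mdeg m) d.+1) => hm.
  pose bm := BMultinom hm.
  have := congr1 (fun M : 'rV[R]_N => M 0 (enum_rank (bm : T))) E.
  rewrite /= !mxE enum_rankK /= => ->.
  by apply: eq_bigr => i _; rewrite !mxE enum_rankK.
rewrite (coef_high (Pdeg Pp) hm) big1 // => i _.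
by rewrite (coef_high (Pdeg (Pf _ (ltn_ord i))) hm) mulr0.
Qed.

Lemma extend k f p : (forall i, (i < k)%N -> P (f i)) ->
  \rank (Mof f k) = k -> P p -> ~~ (vec p <= Mof f k)%MS ->
  let f' := fun i => if i == k then p else f i in
  (forall i, (i < k.+1)%N -> P (f' i)) /\ \rank (Mof f' k.+1) = k.+1.
Proof.
move=> Pf rk Pp np f'; split.
  move=> i; rewrite ltnS leq_eqVlt /f'; case: eqP => [_ _|ik /= ilt] //.
  by apply: Pf.
set M' := Mof f' k.+1.
have sub1 : (Mof f k <= M')%MS.
  apply/row_subP => i.
  have -> : row i (Mof f k) = row (widen_ord (leqnSn k) i) M'.
    apply/rowP => j; rewrite !mxE /f' /=.
    by have := ltn_ord i; case: eqP => // ->; rewrite ltnn.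
  exact: row_sub.
have sub2 : (vec p <= M')%MS.
  have -> : vec p = row ord_max M'.
    by apply/rowP => j; rewrite !mxE /f' /= eqxx.
  exact: row_sub.
have lt : (Mof f k < M')%MS.
  rewrite ltmxE sub1 /=; apply/negP => H; move/negP: np; apply.
  exact: submx_trans sub2 H.
have := rank_ltmx lt; rewrite rk => h1.
have := rank_leq_row M'; lia.
Qed.

Lemma span_ind j : forall k f, (forall i, (i < k)%N -> P (f i)) ->
  \rank (Mof f k) = k -> (N - k <= j)%N ->
  exists k f, (forall i, (i < k)%N -> P (f i)) /\
   forall p, P p -> exists w : 'I_k -> R, p = \sum_(i < k) w i *: f i.
Proof.
elim: j => [|j IH] k f Pf rk hj;
  (case: (classic (exists p, P p /\ ~~ (vec p <= Mof f k)%MS)) => [[p [Pp np]]|H];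
  last first).
- apply: (span_conclude Pf) => p Pp; apply/negPn/negP => np; apply: H; by exists p.
- have [_ rk'] := extend Pf rk Pp np.
  have := rank_leq_col (Mof (fun i => if i == k then p else f i) k.+1).
  rewrite rk'; lia.
- apply: (span_conclude Pf) => p Pp; apply/negPn/negP => np; apply: H; by exists p.
- have [Pf' rk'] := extend Pf rk Pp np.
  apply: (IH _ _ Pf' rk'); lia.
Qed.

Lemma span : exists k f, (forall i, (i < k)%N -> P (f i)) /\
   forall p, P p -> exists w : 'I_k -> R, p = \sum_(i < k) w i *: f i.
Proof.
apply: (@span_ind N 0%N (fun _ => 0)) => //.
- by apply/eqP; rewrite -leqn0 rank_leq_row.
- by rewrite subn0.
Qed.

End Span.

Lemma unif (R : realType) (n s : nat) (g : 'I_s -> {mpoly R[n]}) (k : nat)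
  (f : nat -> {mpoly R[n]}) :
  (forall i, (i < k)%N -> exists K, good g K (f i)) ->
  exists K, forall i, (i < k)%N -> good g K (f i).
Proof.
elim: k => [|k IH] H; first by exists 0%N.
have [K1 H1] := IH (fun i hi => H i (ltnW hi)).
have [K2 H2] := H k (ltnSn k).
exists (maxn K1 K2) => i; rewrite ltnS leq_eqVlt; case/orP => [/eqP ->|hi].
  by apply: good_mono H2; rewrite leq_maxr.
by apply: good_mono (H1 i hi); rewrite leq_maxl.
Qed.

Theorem mainTheorem12 (R : realType) (n s : nat) (g : 'I_s -> {mpoly R[n]})
    (d : nat) :
  exists k : nat, (d <= k)%N /\
    forall p : {mpoly R[n]},
      in_real_radical (in_supp g) p -> deg_le p d ->
      in_closure_k (in_Qt g k) k p.
Proof.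
pose P := fun p : {mpoly R[n]} => in_real_radical (in_supp g) p /\ deg_le p d.
have [k [f [Pf Hspan]]] := @span R n d P (fun p H => H.2).
have [K HK] : exists K, forall i, (i < k)%N -> good g K (f i).
  apply: unif => i hi; have [H1 H2] := Pf i hi; exact: elem H1 H2.
exists (maxn K d); split; first exact: leq_maxr.
move=> p rad dp.
have [w E] := Hspan p (conj rad dp).
have gp : good g (maxn K d) p.
  rewrite E; apply: good_sum => i; apply: good_mono (HK i (ltn_ord i)).
  exact: leq_maxl.
have dpK : deg_le p (maxn K d).
  by move: dp; rewrite !deg_leE => /leq_trans; apply; rewrite leq_maxr.
split => // e e0.
have e2 : 0 < e / 2 by lra.
exists ((e / 2)%:MP + p); split.
- by case: (gp _ e2).
- rewrite deg_leE; apply: leq_trans (tdegD _ _) _.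
  by rewrite tdegC max0n -deg_leE.
- move=> m; rewrite mcoeffD mcoeffC opprD addrA addrAC subrr add0r normrN.
  case: (m == 0%MM); rewrite /= ?mulr1 ?mulr0 ?normr0 //.
  by rewrite ger0_norm; lra.
Qed.
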